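(* Let $k$ be a positive integer and $G$ a finite graph. (1) If $(A,B)$ is a separation of $G$ with $\theta(G[A\cap B])=k$, then $(\widetilde{A},\widetilde{B})$ is a separation of $\widetilde{G}$ with $|\widetilde{A}\cap\widetilde{B}|\le k\cdot\widetilde{\omega}(G)$. (2) If $(X,Y)$ is a separation of $\widetilde{G}$ with $|X\cap Y|=k$, then $(\bigcup X,\bigcup Y)$ is a separation of $G$ with $\theta(G[\bigcup X\cap\bigcup Y])\le k$.
   Context: Two vertices of $G$ are equivalent if they lie in exactly the same maximal cliques of $G$. The clique-quotient graph $\widetilde{G}$ has the equivalence classes as vertices, two distinct classes adjacent iff their representatives are adjacent in $G$. For $A\subseteq V(G)$, $\widetilde{A}$ is the set of equivalence classes containing an element of $A$; for a set $X$ of classes, $\bigcup X$ is the set of all vertices of $G$ lying in a class of $X$. A separation of a graph $H$ is a pair $(A,B)$ of subsets of $V(H)$ with no edge between $A\setminus B$ and $B\setminus A$. $\theta$ is the clique-cover number, and $\widetilde{\omega}(G)$ is the maximum over maximal cliques $K$ of $G$ of the number of equivalence classes meeting $K$. *)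

(* Defs.v *)
From mathcomp Require Import all_boot.
Set Implicit Arguments. Unset Strict Implicit. Unset Printing Implicit Defensive.

(* A finite simple graph: vertex type T : finType, adjacency e : rel T
   (assumed symmetric and irreflexive in the theorem). *)
Section Defs.
Variables (T : finType) (e : rel T).

Definition clique (K : {set T}) : bool :=
  [forall x in K, forall y in K, (x != y) ==> e x y].

Definition maxclique (K : {set T}) : bool := maxset clique K.

Definition cequiv (x y : T) : bool :=
  [forall K : {set T}, maxclique K ==> ((x \in K) == (y \in K))].

Definition eqclass (x : T) : {set T} := [set y | cequiv x y].

(* vertex set of the clique-quotient graph: the set of equivalence classes *)
Definition classes : {set {set T}} := [set eqclass x | x : T].

Definition qadj : rel {set T} :=
  fun c d => (c != d) && [exists x in c, exists y in d, e x y].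

Definition tilde (A : {set T}) : {set {set T}} := [set eqclass x | x in A].

Definition bigUc (X : {set {set T}}) : {set T} := \bigcup_(c in X) c.

Definition clique_cover (S : {set T}) (P : {set {set T}}) : bool :=
  [forall K in P, clique K && (K \subset S)] && (S \subset cover P).

Lemma clique_cover_exists (S : {set T}) :
  exists n, [exists P : {set {set T}}, clique_cover S P && (#|P| == n)].
Proof.
exists #|[set [set x] | x in S]|; apply/existsP; exists [set [set x] | x in S].
rewrite eqxx andbT /clique_cover; apply/andP; split.
  apply/forallP => K; apply/implyP => /imsetP [x xS ->]; apply/andP; split.
    apply/forallP => y; apply/implyP; rewrite in_set1 => /eqP->.
    apply/forallP => z; apply/implyP; rewrite in_set1 => /eqP->.
    by rewrite eqxx.
  by rewrite sub1set.
apply/subsetP => x xS; apply/bigcupP; exists [set x]; last by rewrite in_set1.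
by apply/imsetP; exists x.
Qed.

Definition theta (S : {set T}) : nat := ex_minn (clique_cover_exists S).

Definition omegat : nat :=
  \max_(K : {set T} | maxclique K) #|[set c in classes | c :&: K != set0]|.

End Defs.

Definition separation (U : finType) (V : {set U}) (adj : rel U)
  (A B : {set U}) : bool :=
  [&& A \subset V, B \subset V &
      [forall x in A :\: B, forall y in B :\: A, ~~ adj x y]].

(* Main.v *)
Require Import Defs.
From mathcomp Require Import all_boot.
Set Implicit Arguments. Unset Strict Implicit. Unset Printing Implicit Defensive.

Section Aux.
Variables (T : finType) (e : rel T).
Hypothesis esym : symmetric e.

Lemma cliqueP K x y : clique e K -> x \in K -> y \in K -> x != y -> e x y.
Proof.
move=> /forall_inP H xK yK nxy.
by move: (H x xK) => /forall_inP /(_ y yK) /implyP; apply.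
Qed.

Lemma clique1 x : clique e [set x].
Proof.
apply/forall_inP => y; rewrite in_set1 => /eqP->.
by apply/forall_inP => z; rewrite in_set1 => /eqP->; rewrite eqxx.
Qed.

Lemma clique2 x y : e x y -> clique e [set x; y].
Proof.
move=> exy; apply/forall_inP => u; rewrite !inE => Hu.
apply/forall_inP => v; rewrite !inE => Hv; apply/implyP => nuv.
case/orP: Hu => /eqP Eu; case/orP: Hv => /eqP Ev; subst u v;
  first [by rewrite eqxx in nuv | done | by rewrite esym].
Qed.

Lemma cequivP x y K : cequiv e x y -> maxclique e K -> (x \in K) = (y \in K).
Proof. by move=> /forallP /(_ K) /implyP H /H /eqP. Qed.

Lemma cequiv_refl x : cequiv e x x.
Proof. by apply/forallP => K; rewrite eqxx implybT. Qed.

Lemma cequiv_sym x y : cequiv e x y -> cequiv e y x.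
Proof.
by move=> H; apply/forallP => K; apply/implyP => MK; rewrite (cequivP H MK).
Qed.

Lemma cequiv_trans x y z : cequiv e x y -> cequiv e y z -> cequiv e x z.
Proof.
move=> H1 H2; apply/forallP => K; apply/implyP => MK.
by rewrite (cequivP H1 MK) (cequivP H2 MK).
Qed.

Lemma in_eqclass x y : (y \in eqclass e x) = cequiv e x y.
Proof. by rewrite inE. Qed.

Lemma eqclass_self x : x \in eqclass e x.
Proof. by rewrite in_eqclass cequiv_refl. Qed.

Lemma eqclass_eq a y : y \in eqclass e a -> eqclass e y = eqclass e a.
Proof.
rewrite in_eqclass => H; apply/setP => z; rewrite !in_eqclass.
apply/idP/idP => H'; first exact: cequiv_trans H H'.
exact: cequiv_trans (cequiv_sym H) H'.
Qed.

Lemma cequiv_adj x y : cequiv e x y -> x != y -> e x y.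
Proof.
move=> H nxy; have [M MM sub] := maxset_exists (clique1 x).
have xM : x \in M by rewrite (subsetP sub) ?set11.
have yM : y \in M by rewrite -(cequivP H MM).
exact: cliqueP (maxsetp MM) xM yM nxy.
Qed.

Lemma adj1 a x y : cequiv e a x -> e x y -> a != y -> e a y.
Proof.
move=> H exy nay; have [M MM sub] := maxset_exists (clique2 exy).
have xM : x \in M by rewrite (subsetP sub) // !inE eqxx.
have yM : y \in M by rewrite (subsetP sub) // !inE eqxx orbT.
have aM : a \in M by rewrite (cequivP H MM).
exact: cliqueP (maxsetp MM) aM yM nay.
Qed.

Lemma adj2 a b x y : cequiv e a x -> cequiv e b y -> e x y -> a != b -> e a b.
Proof.
move=> Hax Hby exy nab.
case: (eqVneq a y) => [ay|nay].
  subst y; rewrite esym; apply: cequiv_adj Hby _.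
  by rewrite eq_sym.
have eay := adj1 Hax exy nay.
rewrite esym; apply: adj1 Hby _ _; first by rewrite esym.
by rewrite eq_sym.
Qed.

Lemma class_clique c : c \in classes e -> clique e c.
Proof.
move=> /imsetP [z _ ->]; apply/forall_inP => u; rewrite in_eqclass => Hu.
apply/forall_inP => v; rewrite in_eqclass => Hv; apply/implyP => nuv.
apply: cequiv_adj nuv; exact: cequiv_trans (cequiv_sym Hu) Hv.
Qed.

Lemma Qbound K : clique e K ->
  #|[set c in classes e | c :&: K != set0]| <= omegat e.
Proof.
move=> cK; have [M MM sub] := maxset_exists cK.
apply: leq_trans (@leq_bigmax_cond _ (maxclique e) (fun K0 => #|[set c in classes e | c :&: K0 != set0]|) M MM).
apply: subset_leq_card; apply/subsetP => c; rewrite !inE => /andP [-> H] /=.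
apply: contraNN H => /eqP H; rewrite -subset0 -H; exact: setIS.
Qed.

Lemma card_bigcup_le (I : finType) (P : {set I}) (F : I -> {set {set T}}) n :
  (forall i, i \in P -> #|F i| <= n) -> #|\bigcup_(i in P) F i| <= #|P| * n.
Proof.
move=> H; rewrite -sum_nat_const.
elim/big_rec2: _ => [|i m U Pi leUm]; first by rewrite cards0.
apply: leq_trans (leq_card_setU _ _).1 _.
by apply: leq_add => //; apply: H.
Qed.

End Aux.

Theorem lemma4p1 (T : finType) (e : rel T) (k : nat) :
  symmetric e -> irreflexive e -> 0 < k ->
  (forall A B : {set T},
     separation [set: T] e A B -> theta e (A :&: B) = k ->
     separation (classes e) (qadj e) (tilde e A) (tilde e B) /\
     #|tilde e A :&: tilde e B| <= k * omegat e) /\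
  (forall X Y : {set {set T}},
     separation (classes e) (qadj e) X Y -> #|X :&: Y| = k ->
     separation [set: T] e (bigUc X) (bigUc Y) /\
     theta e (bigUc X :&: bigUc Y) <= k).
Proof.
move=> esym eirr _; split.
- move=> A B /and3P [_ _ /forall_inP sepAB] thk.
  have sepab a b : a \in A -> a \notin B -> b \in B -> b \notin A -> ~~ e a b.
    move=> aA aB bB bA.
    have := sepAB a; rewrite inE aA aB => /(_ isT) /forall_inP; apply.
    by rewrite inE bB bA.
  split.
  + apply/and3P; split.
    * by apply/subsetP => c /imsetP [a _ ->]; apply/imsetP; exists a.
    * by apply/subsetP => c /imsetP [a _ ->]; apply/imsetP; exists a.
    apply/forall_inP => c; rewrite inE => /andP [ncB /imsetP [a aA Ec]].
    apply/forall_inP => d; rewrite inE => /andP [ndA /imsetP [b bB Ed]].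
    apply/negP => /andP [ncd /existsP [x /andP [xc /existsP [y /andP [yd exy]]]]].
    have aB : a \notin B by apply: contra ncB => aB; rewrite Ec; apply/imsetP; exists a.
    have bA : b \notin A by apply: contra ndA => bA; rewrite Ed; apply/imsetP; exists b.
    have nab : a != b by apply: contraNneq aB => ->.
    have Hax : cequiv e a x by rewrite -in_eqclass -Ec.
    have Hby : cequiv e b y by rewrite -in_eqclass -Ed.
    by move: (sepab a b aA aB bB bA); rewrite (adj2 esym Hax Hby exy nab).
  + move: thk; rewrite /theta; case: ex_minnP => m /existsP [P /andP [cov /eqP cP]] _ <-.
    move: cov => /andP [/forall_inP cliq /subsetP covP].
    rewrite -cP.
    apply: leq_trans (card_bigcup_le (F := fun K => [set c in classes e | c :&: K != set0]) _).
    * apply: subset_leq_card; apply/subsetP => c; rewrite inE => /andP [/imsetP [a aA Ea] /imsetP [b bB Eb]].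
      have [z zA [zB zc]] : exists2 z, z \in A & z \in B /\ z \in c.
        case aB: (a \in B); first by exists a => //; split => //; rewrite Ea eqclass_self.
        case bA: (b \in A); first by exists b => //; split => //; rewrite Eb eqclass_self.
        have Hab : cequiv e a b by rewrite -in_eqclass -Ea Eb eqclass_self.
        have nab : a != b by apply: contraFneq aB => ->.
        by move: (sepab a b aA (negbT aB) bB (negbT bA)); rewrite (cequiv_adj Hab nab).
      have /bigcupP [K KP zK] := covP z (introT setIP (conj zA zB)).
      apply/bigcupP; exists K => //; rewrite inE; apply/andP; split.
        by rewrite Ea; apply/imsetP; exists a.
      by apply/set0Pn; exists z; rewrite inE zc.
    * by move=> K KP; apply: Qbound => //; case/andP: (cliq K KP).
- move=> X Y /and3P [sX sY /forall_inP sepXY] cXY.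
  split.
  + apply/and3P; split; try exact: subsetT.
    apply/forall_inP => x; rewrite inE => /andP [xY /bigcupP [c cX xc]].
    apply/forall_inP => y; rewrite inE => /andP [yX /bigcupP [d dY yd]].
    have cY : c \notin Y by apply: contra xY => cY; apply/bigcupP; exists c.
    have dX : d \notin X by apply: contra yX => dX; apply/bigcupP; exists d.
    have := sepXY c; rewrite inE cX cY => /(_ isT) /forall_inP /(_ d).
    rewrite inE dX dY => /(_ isT); apply: contra => exy.
    apply/andP; split; first by apply: contraNneq dX => <-.
    by apply/existsP; exists x; rewrite xc; apply/existsP; exists y; rewrite yd.
  + rewrite /theta; case: ex_minnP => m _ Hm; rewrite -cXY; apply: Hm.
    apply/existsP; exists (X :&: Y); rewrite eqxx andbT; apply/andP; split.
    * apply/forall_inP => K /setIP [KX KY]; apply/andP; split.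
        exact: class_clique (subsetP sX K KX).
      by apply/subsetP => z zK; rewrite inE; apply/andP; split; apply/bigcupP; [exists K|exists K].
    * apply/subsetP => z; rewrite inE => /andP [/bigcupP [c cX zc] /bigcupP [d dY zd]].
      have Ec : c = eqclass e z.
        by move: (subsetP sX c cX) zc => /imsetP [u _ ->] /eqclass_eq ->.
      have Ed : d = eqclass e z.
        by move: (subsetP sY d dY) zd => /imsetP [u _ ->] /eqclass_eq ->.
      by apply/bigcupP; exists c => //; rewrite inE cX Ec -Ed.
Qed.
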